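(* Let $A$ be a ring satisfying the irreducible intersection property, and let $\varphi: A\hookrightarrow B$ be an injective ring map (identify $A$ with its image) such that: (i) for every prime ideal $p\subset A$ there exists a prime ideal $q\subset B$ with $q\cap A=p$; (ii) for every prime ideal $q\subset B$, $(q\cap A)B=q$. Then $B$ satisfies the irreducible intersection property.
   Context: All rings are commutative with $1$. A ring $R$ satisfies the irreducible intersection property if for any prime ideals $p_1,p_2\subset R$, either $p_1+p_2=R$ or $p_1+p_2$ is a prime ideal. For a ring map $A\to B$ and an ideal $J$ of $B$, $J\cap A$ denotes the preimage of $J$ in $A$, and for an ideal $I$ of $A$, $IB$ is the ideal of $B$ generated by the image of $I$. *)

(* Defs.v *)
From HB Require Import structures.
From mathcomp Require Import all_boot all_order all_algebra.
Set Implicit Arguments. Unset Strict Implicit. Unset Printing Implicit Defensive.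
Import GRing.Theory.
Local Open Scope ring_scope.

Definition is_ideal (R : comPzRingType) (I : R -> Prop) : Prop :=
  [/\ I 0,
      (forall x y, I x -> I y -> I (x + y)) &
      (forall r x, I x -> I (r * x))].

Definition is_prime_ideal (R : comPzRingType) (P : R -> Prop) : Prop :=
  [/\ is_ideal P, ~ P 1 &
      (forall a b, P (a * b) -> P a \/ P b)].

Definition ideal_sum (R : comPzRingType) (I J : R -> Prop) : R -> Prop :=
  fun x => exists a b, [/\ I a, J b & x = a + b].

Definition is_whole (R : comPzRingType) (I : R -> Prop) : Prop :=
  forall x, I x.

Definition irreducible_intersection_property (R : comPzRingType) : Prop :=
  forall p1 p2 : R -> Prop, is_prime_ideal p1 -> is_prime_ideal p2 ->
    is_whole (ideal_sum p1 p2) \/ is_prime_ideal (ideal_sum p1 p2).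

Definition contraction (A B : comPzRingType) (phi : A -> B) (J : B -> Prop)
  : A -> Prop := fun a => J (phi a).

Definition extension (A B : comPzRingType) (phi : A -> B) (I : A -> Prop)
  : B -> Prop :=
  fun x => exists (n : nat) (a : 'I_n -> A) (b : 'I_n -> B),
    (forall i, I (a i)) /\ x = \sum_(i < n) b i * phi (a i).

Definition same_ideal (R : comPzRingType) (I J : R -> Prop) : Prop :=
  forall x, I x <-> J x.

(* Main.v *)
Require Import Defs.
From HB Require Import structures.
From mathcomp Require Import all_boot all_order all_algebra.
Import GRing.Theory.
Local Open Scope ring_scope.

Lemma ideal_big (R : comPzRingType) (I : R -> Prop) n (F : 'I_n -> R) :
  is_ideal I -> (forall i, I (F i)) -> I (\sum_(i < n) F i).
Proof. by case=> H0 HD HM HF; apply: big_ind. Qed.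

Lemma prime_ext (R : comPzRingType) (I J : R -> Prop) :
  same_ideal I J -> is_prime_ideal I -> is_prime_ideal J.
Proof.
move=> E [[H0 HD HM] H1 HP]; split; first split.
- by apply/E.
- by move=> x y /E hx /E hy; apply/E; apply: HD.
- by move=> r x /E hx; apply/E; apply: HM.
- by move=> /E.
- by move=> a b /E /HP [] /E; [left|right].
Qed.

Theorem mainTheorem10 (A B : comPzRingType) (phi : {rmorphism A -> B}) :
  irreducible_intersection_property A ->
  injective phi ->
  (forall p : A -> Prop, is_prime_ideal p ->
     exists q : B -> Prop, is_prime_ideal q /\ same_ideal (contraction phi q) p) ->
  (forall q : B -> Prop, is_prime_ideal q ->
     same_ideal (extension phi (contraction phi q)) q) ->
  irreducible_intersection_property B.
Proof.
move=> HA _ Hi Hii q1 q2 Pq1 Pq2.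
have Pp1 : is_prime_ideal (contraction phi q1).
  case: Pq1 => [[H0 HD HM] H1 HP]; split; first split.
  - by rewrite /contraction rmorph0.
  - by move=> x y hx hy; rewrite /contraction rmorphD; apply: HD.
  - by move=> r x hx; rewrite /contraction rmorphM; apply: HM.
  - by rewrite /contraction rmorph1.
  - by move=> a b; rewrite /contraction rmorphM; apply: HP.
have Pp2 : is_prime_ideal (contraction phi q2).
  case: Pq2 => [[H0 HD HM] H1 HP]; split; first split.
  - by rewrite /contraction rmorph0.
  - by move=> x y hx hy; rewrite /contraction rmorphD; apply: HD.
  - by move=> r x hx; rewrite /contraction rmorphM; apply: HM.
  - by rewrite /contraction rmorph1.
  - by move=> a b; rewrite /contraction rmorphM; apply: HP.
case: (HA _ _ Pp1 Pp2) => [W|Pp].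
  left => x; case: (W 1) => a [b [ha hb e]].
  exists (x * phi a), (x * phi b); split.
  - by case: Pq1 => [[_ _ HM] _ _]; apply: HM.
  - by case: Pq2 => [[_ _ HM] _ _]; apply: HM.
  - by rewrite -mulrDr -rmorphD -e rmorph1 mulr1.
right; have [q [Pq Eq]] := Hi _ Pp.
apply: (@prime_ext _ q _ _ Pq); move=> x; split.
- move=> /(Hii _ Pq) [n [a [b [ha ->]]]].
  have [[H10 H1D H1M] _ _] := Pq1; have [[H20 H2D H2M] _ _] := Pq2.
  apply: ideal_big.
    split; first by exists 0, 0; rewrite addr0.
    - move=> x1 y1 [u1 [v1 [h1 h2 ->]]] [u2 [v2 [h3 h4 ->]]].
      exists (u1 + u2), (v1 + v2); split; [exact: H1D|exact: H2D|].
      by rewrite addrACA.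
    - move=> r x1 [u1 [v1 [h1 h2 ->]]]; exists (r * u1), (r * v1).
      by split; [exact: H1M|exact: H2M|rewrite mulrDr].
  move=> i; have /Eq [c [d [hc hd e]]] := ha i.
  exists (b i * phi c), (b i * phi d); split; [exact: H1M|exact: H2M|].
  by rewrite e rmorphD mulrDr.
- move=> [u [v [hu hv ->]]].
  have Iq : is_ideal q by case: Pq.
  case: (Iq) => H0 HD HM; apply: HD.
  + move/(Hii _ Pq1): hu => [n [a [b [ha ->]]]].
    apply: ideal_big => // i; apply: HM; apply/Eq; exists (a i), 0.
    by split => //; [case: Pp2 => [[]] | rewrite addr0].
  + move/(Hii _ Pq2): hv => [n [a [b [ha ->]]]].
    apply: ideal_big => // i; apply: HM; apply/Eq; exists 0, (a i).
    by split => //; [case: Pp1 => [[]] | rewrite add0r].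
Qed.
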